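(* Let $n$ be a positive integer and suppose that $c_n<1$, where $c_n$ is defined below. Then for every finite group $G$ with $H_n(G):=\langle x\in G \;|\; x^n\neq 1\rangle\neq 1$ we have $|G:H_n(G)|<\frac{1}{1-c_n}$.
   Context: For a group $K$ and an automorphism $\phi$ of $K$ whose order divides $n$, write $x^\phi$ for the image of $x$ under $\phi$ and set $X_{n,\phi}(K):=\{x\in K \;|\; x x^{\phi} x^{\phi^2}\cdots x^{\phi^{n-1}}=1\}$. Define $$c_n:=\sup\left(\left\{\frac{|X_{n,\phi}(H)|}{|H|} : H \text{ a finite group},\ \phi\in \mathrm{Aut}(H),\ \phi^n=\mathrm{id}\right\}\setminus\{1\}\right).$$ *)

(* Defs.v *)
From HB Require Import structures.
From mathcomp Require Import all_boot all_order all_algebra all_fingroup.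
From mathcomp Require Import boolp classical_sets reals.
Unset Printing Implicit Defensive.
Import Order.TTheory GRing.Theory Num.Theory.

(* X_{n,phi}(H) for H the whole finite group gT and phi : {perm gT}:
   { x | x * x^phi * x^(phi^2) * ... * x^(phi^(n-1)) = 1 }  (ordered product). *)
Definition Xnphi (gT : finGroupType) (n : nat) (phi : {perm gT}) : {set gT} :=
  [set x : gT | (\prod_(i < n) (phi ^+ i)%g x)%g == 1%g].

Definition cn_ratios (R : realType) (n : nat) : set R :=
  [set r | exists (gT : finGroupType) (phi : {perm gT}),
      [/\ phi \in Aut [set: gT], (phi ^+ n)%g = 1%g &
          r = (#|Xnphi gT n phi|%:R / #|[set: gT]|%:R)%R]] `\ 1%R.

Definition c_n (R : realType) (n : nat) : R := sup (cn_ratios R n).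

Definition Hn (gT : finGroupType) (G : {set gT}) (n : nat) : {set gT} :=
  <<[set x in G | (x ^+ n != 1)%g]>>%g.

(* Main.v *)
Require Import Defs.
From HB Require Import structures.
From mathcomp Require Import all_boot all_order all_algebra all_fingroup.
From mathcomp Require Import boolp classical_sets reals.
From mathcomp Require Import zify.
Import Order.TTheory GRing.Theory Num.Theory.

Lemma prod_cst_expg (gT : finGroupType) (x : gT) (n : nat) :
  (\prod_(i < n) x)%g = (x ^+ n)%g.
Proof.
elim: n => [|n IH]; first by rewrite big_ord0 expg0.
by rewrite big_ord_recr /= IH expgSr.
Qed.

Lemma card_X1 (gT : finGroupType) (G : {group gT}) (n : nat) :
  #|Xnphi (subg_of G) n 1%g| = #|[set x in G | (x ^+ n == 1)%g]|.
Proof.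
have -> : Xnphi (subg_of G) n 1%g = [set u : subg_of G | (u ^+ n == 1)%g].
  apply/finset.setP => u; rewrite !inE.
  under eq_bigr => i _ do rewrite expg1n perm1.
  by rewrite prod_cst_expg.
rewrite -(card_imset _ (@subg_inj _ G)); apply: eq_card => y.
apply/imsetP/idP.
- case=> u; rewrite inE => /eqP un ->; rewrite inE subgP /=.
  have : sgval (u ^+ n)%g = (sgval u ^+ n)%g by rewrite morphX ?inE.
  by rewrite un => <-.
- rewrite inE => /andP[yG /eqP yn]; exists (subg G y); last by rewrite subgK.
  rewrite inE; apply/eqP; apply: subg_inj.
  by rewrite (morphX (sgval_morphism G)) ?inE //= subgK // yn.
Qed.

Lemma card_subgT (gT : finGroupType) (G : {group gT}) :
  #|[set: subg_of G]| = #|G|.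
Proof.
rewrite -(card_imset _ (@subg_inj _ G)); apply: eq_card => y.
apply/imsetP/idP.
- by case=> u _ ->; apply: subgP.
- by move=> yG; exists (subg G y); rewrite ?inE ?subgK.
Qed.

Theorem proposition1p4 (R : realType) (n : nat) (gT : finGroupType) (G : {group gT}) :
  (0 < n)%N -> (c_n R n < 1)%R -> (Hn gT G n != 1)%g ->
  ((#|G : Hn gT G n|)%g%:R < 1 / (1 - c_n R n))%R.
Proof.
move=> n0 c1 Hn1.
set A := [set x in G | (x ^+ n != 1)%g].
set S := [set x in G | (x ^+ n == 1)%g].
set H := Hn gT G n.
have AG : A \subset G by apply/fintype.subsetP => x; rewrite inE => /andP[].
have SG : S \subset G by apply/fintype.subsetP => x; rewrite inE => /andP[].
have HG : H \subset G by rewrite /H /Hn gen_subG.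
have lag := Lagrange HG.
have A0 : A != finset.set0.
  apply: contra Hn1 => /eqP A0; by rewrite /H /Hn -/A A0 gen0.
have [x xA] := set0Pn _ A0.
have SltG : (#|S| < #|G|)%N.
  apply: proper_card; apply/properP; split => //; exists x.
    by move: xA; rewrite inE => /andP[].
  by move: xA; rewrite !inE => /andP[-> ->].
have key : (#|G| + 1 <= #|S| + #|H|)%N.
  have := cardsUI S H.
  have : (0 < #|S :&: H|)%N.
    apply/card_gt0P; exists 1%g; rewrite !inE group1 expg1n eqxx /=.
    exact: group1.
  have : (#|G| <= #|S :|: H|)%N.
    apply: subset_leq_card; apply/fintype.subsetP => y yG; rewrite inE.
    case: (boolP (y ^+ n == 1)%g) => yn; first by rewrite inE yG yn.
    by rewrite orbC /H /Hn mem_gen // inE yG yn.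
  by move=> a b <-; apply: leq_add.
set N := #|G|; set s := #|S|; set h := #|H|; set k := #|G : H|%g.
have N0 : (0 < N)%N by apply/card_gt0P; exists 1%g.
have lag' : (h * k = N)%N by rewrite /h /k /N -lag.
have k0 : (0 < k)%N by move: N0; rewrite -lag' muln_gt0 => /andP[].
have e1 : (N - s <= h - 1)%N by move: key; rewrite -/N -/s -/h; lia.
have e2 : (k * (N - s) <= k * (h - 1))%N by rewrite leq_mul2l e1 orbT.
have e3 : (k * (h - 1) = N - k)%N by rewrite mulnBr muln1 mulnC lag'.
have knat : (k * (N - s) < N)%N by move: e2; rewrite e3; lia.
set r : R := (s%:R / N%:R)%R.
have rin : cn_ratios R n r.
  split.
    exists (subg_of G), 1%g; split; first exact: group1.
      by rewrite expg1n.
    by rewrite card_X1 card_subgT.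
  move=> /= r1; move: r1; rewrite /r => /divr1_eq /eqP.
  rewrite eqr_nat => /eqP sN.
  by move: SltG; rewrite -/s -/N sN ltnn.
have ub : has_ubound (cn_ratios R n).
  exists 1%R => z [[gT' [phi [_ _ ->]]] _].
  have T0 : (0 < #|[set: gT']|)%N by apply/card_gt0P; exists 1%g.
  rewrite ler_pdivrMr ?ltr0n // mul1r ler_nat.
  by apply: subset_leq_card; apply: finset.subsetT.
have rc : (r <= c_n R n)%R := ub_le_sup ub rin.
have d0 : (0 < 1 - c_n R n)%R by rewrite subr_gt0.
rewrite ltr_pdivlMr //.
apply: (le_lt_trans (y := (k%:R * (1 - r))%R)).
  by rewrite ler_wpM2l ?ler0n // lerB.
have -> : (1 - r = (N - s)%:R / N%:R)%R.
  rewrite natrB; last by apply: ltnW.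
  rewrite /r mulrBl divff // pnatr_eq0 -lt0n //.
rewrite mulrA ltr_pdivrMr ?ltr0n // mul1r -natrM ltr_nat //.
Qed.
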